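(* Fix a structure $\phi$ with nested prediction sets $C_{\phi,\lambda}(x)$ indexed by $\lambda\in\Lambda\subseteq\mathbb{R}$ (i.e. $\lambda_1\le\lambda_2$ implies $C_{\phi,\lambda_1}(x)\subseteq C_{\phi,\lambda_2}(x)$), and write $R(\lambda)=\mathbb{P}\{Y\notin C_{\phi,\lambda}(X)\}$. Let $\alpha\in(0,1)$ and $\lambda^\star=\inf\{\lambda:R(\lambda)\le\alpha\}$. Assume: (1) $R(\lambda)$ is continuous and strictly decreasing in a neighbourhood of $\lambda^\star$; (2) a sequence of random thresholds $\widehat{\lambda}_{\mathrm{DCO}}$ (indexed by sample size $m$) satisfies $\widehat{\lambda}_{\mathrm{DCO}}\xrightarrow{p}\lambda^\star$ as $m\to\infty$; (3) $\widehat{\lambda}_{\mathrm{CRC}}=\inf\{\lambda\in\Lambda:\widehat{R}_m(\lambda)+b_m(\lambda,\delta_m)\le\alpha\}$, where $\widehat{R}_m$ are random functions and $b_m(\lambda,\delta_m)\ge 0$ are random margins satisfying $\sup_{\lambda\in\Lambda}|\widehat{R}_m(\lambda)-R(\lambda)|\xrightarrow{p}0$ and $\sup_{\lambda\in\Lambda}b_m(\lambda,\delta_m)\xrightarrow{p}0$ as $m\to\infty$. Then $\widehat{\lambda}_{\mathrm{CRC}}-\widehat{\lambda}_{\mathrm{DCO}}\xrightarrow{p}0$.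
   Context: $(X,Y)$ is a random pair with values in $\mathcal{X}\times\mathcal{Y}$; $\delta_m\in(0,1)$ is a sequence of confidence parameters; $\xrightarrow{p}$ denotes convergence in probability as $m\to\infty$. *)

(* Defs.v *)
From HB Require Import structures.
From mathcomp Require Import all_boot all_order all_algebra.
From mathcomp Require Import all_classical all_reals all_analysis.
Set Implicit Arguments. Unset Strict Implicit. Unset Printing Implicit Defensive.
Import Order.TTheory GRing.Theory Num.Theory.
Import numFieldNormedType.Exports.
Local Open Scope classical_set_scope.
Local Open Scope ring_scope.

Definition outer_prob (d : measure_display) (T : measurableType d)
  (R : realType) (P : probability T R) (A : set T) : \bar R :=
  ereal_inf [set P B | B in [set B | measurable B /\ A `<=` B]].

Definition cvg_in_prob (d : measure_display) (T : measurableType d)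
  (R : realType) (P : probability T R) (Z : nat -> T -> \bar R) (c : R) : Prop :=
  forall eps : R, 0 < eps ->
    (fun m => outer_prob P [set w | (eps%:E < `|Z m w - c%:E|)%E])
      @ \oo --> 0%E.

Definition risk (d : measure_display) (T : measurableType d) (R : realType)
  (Q : probability T R) (X Y : Type) (XT : T -> X) (YT : T -> Y)
  (C : R -> X -> set Y) (l : R) : R :=
  fine (Q [set t | ~ C l (XT t) (YT t)]).

(* Main.v *)
Require Import Defs.
From HB Require Import structures.
From mathcomp Require Import all_boot all_order all_algebra.
From mathcomp Require Import all_classical all_reals all_analysis.
From mathcomp Require Import ring lra.
Import Order.TTheory GRing.Theory Num.Theory.
Import numFieldNormedType.Exports.
Local Open Scope classical_set_scope.
Local Open Scope ring_scope.

Section Outer.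
Context (d : measure_display) (T : measurableType d) (R : realType) (P : probability T R).

Lemma outer_ge0 A : (0 <= outer_prob P A)%E.
Proof. apply/ereal_infP => _ [B _ <-]; exact: measure_ge0. Qed.

Lemma outer_le_cover A B : measurable B -> A `<=` B -> (outer_prob P A <= P B)%E.
Proof. by move=> mB AB; apply: ge_ereal_inf; exists (P B) => //; exists B. Qed.

Lemma outer_fin A : outer_prob P A \is a fin_num.
Proof.
rewrite ge0_fin_numE ?outer_ge0 //.
have := @outer_le_cover A setT (@measurableT _ T) (@subsetT _ A).
rewrite probability_setT => h; exact: le_lt_trans h (ltry 1).
Qed.

Lemma outer_lt A e : (outer_prob P A < e)%E ->
  exists B, [/\ measurable B, A `<=` B & (P B < e)%E].
Proof. by move/ereal_inf_lt => [_ [B [mB AB] <-] lt]; exists B. Qed.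

Lemma cvg_outerP (u : nat -> set T) :
  (fun m => outer_prob P (u m)) @ \oo --> 0%E <->
  forall e : R, 0 < e -> \forall m \near \oo, (outer_prob P (u m) < e%:E)%E.
Proof.
rewrite fine_cvgP; split.
- move=> [_ /cvgrPdist_lt H] e e0; move: (H e e0); apply: filterS => m.
  rewrite sub0r normrN /= => lt.
  rewrite -(fineK (outer_fin (u m))) lte_fin; exact: le_lt_trans (ler_norm _) lt.
- move=> H; split; first by apply: nearW => m; exact: outer_fin.
  apply/cvgrPdist_lt => e e0; move: (H e e0); apply: filterS => m /= lt.
  rewrite sub0r normrN ger0_norm ?fine_ge0 ?outer_ge0 //.
  by rewrite -lte_fin fineK ?outer_fin.
Qed.
Lemma outer_union3 (E A1 A2 A3 : nat -> set T) :
  (forall m, E m `<=` A1 m `|` A2 m `|` A3 m) ->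
  (fun m => outer_prob P (A1 m)) @ \oo --> 0%E ->
  (fun m => outer_prob P (A2 m)) @ \oo --> 0%E ->
  (fun m => outer_prob P (A3 m)) @ \oo --> 0%E ->
  (fun m => outer_prob P (E m)) @ \oo --> 0%E.
Proof.
move=> sub /cvg_outerP h1 /cvg_outerP h2 /cvg_outerP h3; apply/cvg_outerP => e e0.
have e3 : 0 < e / 3 by rewrite divr_gt0.
move: (h1 _ e3) (h2 _ e3) (h3 _ e3) => F1 F2 F3.
apply: filterS (filterI F1 (filterI F2 F3)) => m [l1 [l2 l3]].
have [B1 [mB1 sB1 lt1]] := @outer_lt _ _ l1.
have [B2 [mB2 sB2 lt2]] := @outer_lt _ _ l2.
have [B3 [mB3 sB3 lt3]] := @outer_lt _ _ l3.
have mB12 : measurable (B1 `|` B2) by exact: measurableU.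
have mB : measurable (B1 `|` B2 `|` B3) by exact: measurableU.
have hc := @outer_le_cover (E m) (B1 `|` B2 `|` B3) mB
  (fun w h => match sub m w h with
   | or_introl (or_introl h1) => or_introl (or_introl (sB1 w h1))
   | or_introl (or_intror h2) => or_introl (or_intror (sB2 w h2))
   | or_intror h3 => or_intror (sB3 w h3) end).
apply: le_lt_trans hc _.
apply: le_lt_trans (@measureU2 _ _ _ P _ _ mB12 mB3) _.
have h12 : (P (B1 `|` B2) + P B3 <= P B1 + P B2 + P B3)%E.
  by rewrite leeD2r // measureU2.
apply: le_lt_trans h12 _.
have -> : e = e / 3 + e / 3 + e / 3 by field.
by rewrite !EFinD !lteD.
Qed.
End Outer.
Theorem proposition3p3
  (R : realType)
  (* the random pair (X,Y) with values in 𝒳 × 𝒴 *)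
  (dT : measure_display) (T : measurableType dT) (Q : probability T R)
  (X Y : Type) (XT : T -> X) (YT : T -> Y)
  (* nested prediction sets C_{phi,lambda}, lambda in Lambda *)
  (Lambda : set R) (C : R -> X -> set Y)
  (C_nested : forall l1 l2 x, Lambda l1 -> Lambda l2 -> l1 <= l2 ->
       C l1 x `<=` C l2 x)
  (C_meas : forall l, Lambda l -> measurable [set t | ~ C l (XT t) (YT t)])
  (alpha : R) (alpha01 : 0 < alpha < 1)
  (lstar : R)
  (lstar_def : lstar%:E = ereal_inf
       [set l%:E | l in [set l | Lambda l /\ risk Q XT YT C l <= alpha]])
  (* (1) continuity and strict decrease of R near lambda* *)
  (H1 : exists2 r : R, 0 < r &
       [/\ `]lstar - r, lstar + r[ `<=` Lambda,
           {within `]lstar - r, lstar + r[, continuous (risk Q XT YT C)} &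
           forall l1 l2, l1 \in `]lstar - r, lstar + r[ ->
             l2 \in `]lstar - r, lstar + r[ -> l1 < l2 ->
             risk Q XT YT C l2 < risk Q XT YT C l1])
  (* the calibration-data probability space *)
  (dO : measure_display) (Omega : measurableType dO) (P : probability Omega R)
  (* (2) DCO thresholds *)
  (lamDCO : nat -> Omega -> R)
  (H2 : cvg_in_prob P (fun m w => (lamDCO m w)%:E) lstar)
  (* (3) CRC ingredients *)
  (delta : nat -> R) (delta01 : forall m, 0 < delta m < 1)
  (Rhat : nat -> Omega -> R -> R) (b : nat -> Omega -> R -> R -> R)
  (b_ge0 : forall m w l, Lambda l -> 0 <= b m w l (delta m))
  (H3R : cvg_in_prob P (fun m w =>
       ereal_sup [set (`|Rhat m w l - risk Q XT YT C l|)%:E | l in Lambda]) 0)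
  (H3b : cvg_in_prob P (fun m w =>
       ereal_sup [set (b m w l (delta m))%:E | l in Lambda]) 0)
  (lamCRC : nat -> Omega -> \bar R)
  (lamCRC_def : forall m w, lamCRC m w = ereal_inf
       [set l%:E | l in [set l | Lambda l /\
                                  Rhat m w l + b m w l (delta m) <= alpha]]) :
  cvg_in_prob P (fun m w => (lamCRC m w - (lamDCO m w)%:E)%E) 0.
Proof.
set Rk := risk Q XT YT C.
have Rk_mono : forall l1 l2, Lambda l1 -> Lambda l2 -> l1 <= l2 -> Rk l2 <= Rk l1.
  move=> l1 l2 L1 L2 le12; rewrite /Rk /risk.
  have fin l : Lambda l -> Q [set t | ~ C l (XT t) (YT t)] \is a fin_num.
    move=> Ll; rewrite ge0_fin_numE ?measure_ge0 //.
    have h := probability_le1 Q (C_meas l Ll); exact: le_lt_trans h (ltry 1).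
  apply: fine_le; [exact: fin|exact: fin|].
  apply: le_measure; rewrite ?inE; [exact: C_meas L2|exact: C_meas L1|].
  by move=> t /= nC; apply: contra_not nC; exact: (C_nested l1 l2 (XT t) L1 L2 le12).
case: H1 => r r0 [Hsub _ Hdec].
move=> eps0 eps00.
pose e := Num.min (eps0 / 2) (r / 2).
have e0 : 0 < e by rewrite lt_min !divr_gt0.
have ee0 : e <= eps0 / 2 by rewrite ge_min lexx.
have er : e <= r / 2 by rewrite ge_min lexx orbT.
have inP : (lstar + e) \in `]lstar - r, lstar + r[.
  by rewrite in_itv /=; apply/andP; split; lra.
have inM : (lstar - e) \in `]lstar - r, lstar + r[.
  by rewrite in_itv /=; apply/andP; split; lra.
have LP := Hsub _ inP.
have LM := Hsub _ inM.
have RkP : Rk (lstar + e) < alpha.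
  have : (lstar%:E < (lstar + e)%:E)%E by rewrite lte_fin; lra.
  rewrite lstar_def => /ereal_inf_lt [_ [l' [Ll' Rl'] <-]].
  rewrite lte_fin => ll'.
  have ls : (lstar%:E <= l'%:E)%E.
    by rewrite lstar_def; apply: ereal_inf_lbound; exists l'.
  rewrite lee_fin in ls.
  apply: lt_le_trans Rl'.
  apply: Hdec => //; rewrite in_itv /=; apply/andP; split; lra.
have RkM : alpha < Rk (lstar - e).
  rewrite ltNge; apply/negP => Rle.
  have : (lstar%:E <= (lstar - e)%:E)%E.
    by rewrite lstar_def; apply: ereal_inf_lbound; exists (lstar - e).
  rewrite lee_fin; lra.
pose eta := Num.min (alpha - Rk (lstar + e)) (Rk (lstar - e) - alpha).
have eta0 : 0 < eta by rewrite lt_min !subr_gt0 RkP RkM.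
have etaP : eta <= alpha - Rk (lstar + e) by rewrite ge_min lexx.
have etaM : eta <= Rk (lstar - e) - alpha by rewrite ge_min lexx orbT.
pose s := eta / 3.
have s0 : 0 < s by rewrite divr_gt0.
have h1 := H3R s s0; have h2 := H3b s s0; have h3 := H2 e e0.
rewrite /cvg_in_prob in h1 h2 h3 *. move: h1 h2 h3. idtac. 
move=> h1 h2 h3; refine (@outer_union3 _ _ _ P _ _ _ _ _ h1 h2 h3) => m w /= Ew.
apply: contrapT => nor.
move/not_orP: nor => [/not_orP [n1 n2] n3].
move/negP: n1; rewrite -leNgt oppr0 adde0 => n1.
move/negP: n2; rewrite -leNgt oppr0 adde0 => n2.
move/negP: n3; rewrite -leNgt lee_fin => n3.
have hR l : Lambda l -> `|Rhat m w l - Rk l| <= s.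
  move=> Ll; rewrite -lee_fin; apply: le_trans n1; apply: le_trans (lee_abs _).
  by apply: ereal_sup_ubound; exists l.
have hb l : Lambda l -> b m w l (delta m) <= s.
  move=> Ll; rewrite -lee_fin; apply: le_trans n2; apply: le_trans (lee_abs _).
  by apply: ereal_sup_ubound; exists l.
have sE : 3 * s = eta by rewrite /s; field.
have up : (lamCRC m w <= (lstar + e)%:E)%E.
  rewrite lamCRC_def; apply: ge_ereal_inf; exists ((lstar + e)%:E) => //.
  exists (lstar + e) => //; split => //.
  move: (hR _ LP) (hb _ LP); rewrite ler_norml => /andP [_ h1'] h2'; lra.
have lo : ((lstar - e)%:E <= lamCRC m w)%E.
  rewrite lamCRC_def; apply/ereal_infP => _ [l [Ll Hl] <-]; rewrite lee_fin.
  rewrite leNgt; apply/negP => ll.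
  have := Rk_mono _ _ Ll LM (ltW ll).
  move: (hR _ Ll) (b_ge0 m w l Ll); rewrite ler_norml => /andP [h1' _] h2'; lra.
move: up lo Ew; case: (lamCRC m w) => [c| |] //= up lo Ew.
rewrite !lee_fin in up lo.
move: Ew; rewrite subr0 lte_fin ltr_normr.
move: n3; rewrite ler_norml => /andP [n3a n3b].
case/orP => H; lra.
Qed.
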